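(* Let $\mathcal X$ be a finite abelian group, $\mathcal Z$ a finite set, $P_{XZ}$ a distribution on $\mathcal X\times\mathcal Z$, and consider the conditional additive channel $W_{XZ|X}(x,z|x'):=P_{XZ}(x-x',z)$ from $\mathcal X$ to $\mathcal X\times\mathcal Z$. For any finite set $\mathcal M$, any distribution $P_M$ on $\mathcal M$ and any $c>0$, \[ P_{js}(P_M,W_{XZ|X})\le \sum_{\substack{(m,x,z):\ P_{XZ}(x,z)>0,\\ P_M(m)P_{X|Z}(x|z)\le c/|\mathcal X|}}P_M(m)P_{XZ}(x,z)\;+\;\frac1c, \] where $P_{X|Z}(x|z):=P_{XZ}(x,z)/P_Z(z)$ and $P_Z(z):=\sum_xP_{XZ}(x,z)$.
   Context: A code $\phi=(\mathsf e,\mathsf d)$ for a channel $W_{Y|X}$ consists of $\mathsf e:\mathcal M\to\mathcal X$ and $\mathsf d:\mathcal Y\to\mathcal M$ (here $\mathcal Y=\mathcal X\times\mathcal Z$); $P_{js}[\phi|P_M,W_{Y|X}]:=\sum_{m}P_M(m)W_{Y|X}(\{y:\mathsf d(y)\ne m\}|\mathsf e(m))$ and $P_{js}(P_M,W_{Y|X}):=\inf_\phi P_{js}[\phi|P_M,W_{Y|X}]$. *)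

(* Defs.v *)
From HB Require Import structures.
From mathcomp Require Import all_boot all_order all_algebra.
Set Implicit Arguments. Unset Strict Implicit. Unset Printing Implicit Defensive.
Import Order.TTheory GRing.Theory Num.Theory.
Local Open Scope ring_scope.

Definition is_dist (R : realFieldType) (T : finType) (P : T -> R) : Prop :=
  (forall t, 0 <= P t) /\ \sum_(t : T) P t = 1.

(* a channel W_{Y|X}, given as W x y = W(y|x) *)
Definition channel (R : realFieldType) (X Y : finType) := X -> Y -> R.

Definition code (M X Y : finType) := ({ffun M -> X} * {ffun Y -> M})%type.

Definition Pjs_code (R : realFieldType) (M X Y : finType)
  (PM : M -> R) (W : channel R X Y) (phi : code M X Y) : R :=
  \sum_(m : M) PM m * \sum_(y : Y | phi.2 y != m) W (phi.1 m) y.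

(* P_js(P_M, W) = inf over all codes; the set of codes is finite, so the
   infimum is a minimum.  The seed value 1 is an upper bound of every
   P_js[phi|P_M,W] when P_M and each W(.|x) are distributions, so it does
   not affect the value. *)
Definition Pjs (R : realFieldType) (M X Y : finType)
  (PM : M -> R) (W : channel R X Y) : R :=
  \big[Num.min/1]_(phi : code M X Y) Pjs_code PM W phi.

Definition marg_Z (R : realFieldType) (X Z : finType) (P : X * Z -> R) (z : Z) : R :=
  \sum_(x : X) P (x, z).
Definition cond_XZ (R : realFieldType) (X Z : finType) (P : X * Z -> R) (x : X) (z : Z) : R :=
  P (x, z) / marg_Z P z.

Definition cond_add_channel (R : realFieldType) (X : finZmodType) (Z : finType)
  (P : X * Z -> R) : channel R X (X * Z)%type :=
  fun x' y => P (y.1 - x', y.2).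

(* Main.v *)
Require Import Defs.
From HB Require Import structures.
From mathcomp Require Import all_boot all_order all_algebra.
From mathcomp Require Import ring lra.
Import Order.TTheory GRing.Theory Num.Theory.
Local Open Scope ring_scope.

Lemma bigmin_le_any (R : realFieldType) (I : finType) (F : I -> R) (i : I) :
  \big[Num.min/1]_(j : I) F j <= F i.
Proof.
rewrite (bigD1 i) //=. by rewrite ge_min lexx.
Qed.

Lemma sum_shift (R : realFieldType) (M : finType) (X : finZmodType)
  (F : {ffun M -> X} -> R) (d : {ffun M -> X}) :
  \sum_(e : {ffun M -> X}) F e = \sum_(e : {ffun M -> X}) F [ffun k => e k + d k].
Proof.
apply: (reindex_inj (h := fun e : {ffun M -> X} => [ffun k => e k + d k])).
move=> e1 e2 /ffunP H; apply/ffunP => k; move: (H k); rewrite !ffunE.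
exact: addIr.
Qed.

Lemma sum_indep (R : realFieldType) (M : finType) (X : finZmodType)
  (m m' : M) (h : X -> X -> R) : m != m' ->
  (#|X| ^ 2)%:R * \sum_(e : {ffun M -> X}) h (e m) (e m') =
  #|{ffun M -> X}|%:R * \sum_(a : X) \sum_(b : X) h a b.
Proof.
move=> nm.
have E : forall a b, \sum_(e : {ffun M -> X}) h (e m) (e m') =
   \sum_(e : {ffun M -> X}) h (e m + a) (e m' + b).
  move=> a b.
  rewrite (@sum_shift _ _ _ _ [ffun k => if k == m then a else if k == m' then b else 0]).
  apply: eq_bigr => e _; rewrite !ffunE eqxx eq_sym (negbTE nm) eqxx.
  done.

transitivity (\sum_(a:X) \sum_(b:X) \sum_(e : {ffun M -> X}) h (e m + a) (e m' + b)).
  symmetry. etransitivity. apply: eq_bigr => a _. apply: eq_bigr => b _. rewrite -E. reflexivity.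
  by rewrite /= !sumr_const mulr_natl -mulrnA mulnn.
have F : forall e : {ffun M -> X}, \sum_(a:X) \sum_(b:X) h (e m + a) (e m' + b) = \sum_(a : X) \sum_(b : X) h a b.
  move=> e.
  rewrite (reindex_inj (h := fun a => a - e m)); last exact: addIr.
  apply: eq_bigr => a _.
  rewrite (reindex_inj (h := fun b => b - e m')); last exact: addIr.
  apply: eq_bigr => b _. by rewrite addrC subrK addrC subrK.
etransitivity. apply: eq_bigr => a _. apply: exchange_big.
rewrite /= exchange_big /=.
etransitivity. apply: eq_bigr => e _. apply: F.
by rewrite /= sumr_const mulr_natl.
Qed.

Definition score (R : realFieldType) (X : finZmodType) (Z M : finType)
  (PXZ : X * Z -> R) (PM : M -> R) (e : {ffun M -> X}) (m : M) (y : X * Z) : R :=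
  PM m * cond_XZ PXZ (y.1 - e m) y.2.

Arguments score {R X Z M} PXZ PM e m y.

Definition dec (R : realFieldType) (X : finZmodType) (Z M : finType)
  (PXZ : X * Z -> R) (PM : M -> R) (thr : R) (m0 : M) (e : {ffun M -> X}) :
  {ffun X * Z -> M} :=
  [ffun y => if [pick m | thr < score PXZ PM e m y] is Some m then m else m0].

Arguments dec {R X Z M} PXZ PM thr m0 e.

Lemma ind_bound (R : realFieldType) (X : finZmodType) (Z M : finType)
  (PXZ : X * Z -> R) (PM : M -> R) (thr : R) (m0 : M) (e : {ffun M -> X}) m y :
  ((dec PXZ PM thr m0 e y) != m)%:R <=
   (score PXZ PM e m y <= thr)%R%:R + \sum_(m' | m' != m) (thr < score PXZ PM e m' y)%R%:R :> R.
Proof.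
have S0 : 0 <= \sum_(m' | m' != m) (thr < score PXZ PM e m' y)%R%:R :> R.
  by apply: sumr_ge0 => i _; rewrite ler0n.
case: (boolP (score PXZ PM e m y <= thr)) => H.
  have : ((dec PXZ PM thr m0 e y) != m)%:R <= 1 :> R by case: (_ != _); rewrite ?ler01 ?lexx.
  move=> H1; rewrite /=; lra.
rewrite /= add0r /dec ffunE; case: pickP => [m'' Hm''|Hn]; last first.
  by move: (Hn m); rewrite ltNge H.
case: (eqVneq m'' m) => [E|nm]; first exact: S0.
rewrite (bigD1 m'') //= Hm''.
have S1 : 0 <= \sum_(i | (i != m) && (i != m'')) (thr < score PXZ PM e i y)%R%:R :> R.
  by apply: sumr_ge0 => i _; rewrite ler0n.
rewrite /=; lra.
Qed.

Lemma stepA (R : realFieldType) (X : finZmodType) (Z M : finType)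
  (PXZ : X * Z -> R) (PM : M -> R) (thr : R) (m0 : M) (e : {ffun M -> X}) :
  (forall t, 0 <= PXZ t) -> (forall m, 0 <= PM m) ->
  Pjs_code PM (cond_add_channel PXZ) (e, dec PXZ PM thr m0 e) <=
  \sum_m \sum_(y : X * Z) PM m * (PXZ (y.1 - e m, y.2) * (score PXZ PM e m y <= thr)%R%:R)
  + \sum_m \sum_(m' | m' != m) \sum_(y : X * Z) PM m * (PXZ (y.1 - e m, y.2) * (thr < score PXZ PM e m' y)%R%:R).
Proof.
move=> P0 PM0.
rewrite /Pjs_code /cond_add_channel /= -big_split /=; apply: ler_sum => m _.
rewrite big_mkcond mulr_sumr exchange_big -big_split /=; apply: ler_sum => y _.
rewrite -mulr_sumr -mulrDr; apply: ler_wpM2l => //.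
rewrite -mulr_sumr -mulrDr.
have -> : (if dec PXZ PM thr m0 e y != m then PXZ (y.1 - e m, y.2) else 0)
   = PXZ (y.1 - e m, y.2) * (dec PXZ PM thr m0 e y != m)%:R.
  by case: (_ != _); rewrite ?mulr1 ?mulr0.
apply: ler_wpM2l => //; exact: ind_bound.
Qed.

Lemma sum3 (R : realFieldType) (X : finZmodType) (Z M : finType) (F : M -> X -> Z -> R) :
  \sum_(t : M * X * Z) F t.1.1 t.1.2 t.2 = \sum_m \sum_(y : X * Z) F m y.1 y.2.
Proof.
rewrite -(pair_bigA _ (fun mx z => F mx.1 mx.2 z)) -(pair_bigA _ (fun m x => \sum_z F m x z)).
apply: eq_bigr => m _; exact: (pair_bigA _ (F m)).
Qed.

Lemma stepA2 (R : realFieldType) (X : finZmodType) (Z M : finType)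
  (PXZ : X * Z -> R) (PM : M -> R) (thr : R) (e : {ffun M -> X}) :
  (forall t, 0 <= PXZ t) -> (forall m, 0 <= PM m) ->
  \sum_m \sum_(y : X * Z) PM m * (PXZ (y.1 - e m, y.2) * (score PXZ PM e m y <= thr)%R%:R)
  <= \sum_(t : M * X * Z |
            (0 < PXZ (t.1.2, t.2)) &&
            (PM t.1.1 * cond_XZ PXZ t.1.2 t.2 <= thr))
       PM t.1.1 * PXZ (t.1.2, t.2).
Proof.
move=> P0 PM0.

pose G := (fun m x z => if (0 < PXZ (x, z)) && (PM m * cond_XZ PXZ x z <= thr)
                          then PM m * PXZ (x, z) else 0).
have E := (@sum3 _ _ _ _ G).
apply: (le_trans _ (_ : \sum_m \sum_(y : X * Z) G m y.1 y.2 <= _)); last first.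
  rewrite -E [X in _ <= X]big_mkcond; exact: lexx.
apply: ler_sum => m _.
rewrite (reindex_inj (h := fun y : X * Z => (y.1 + e m, y.2))); last first.
  by move=> [a b] [a' b'] /= [/addIr -> ->].
apply: ler_sum => [[x z]] _ /=.
rewrite /G /score /= addrK.
case: (boolP (0 < PXZ (x, z))) => Hp /=.
  by case: (_ <= thr); rewrite ?mulr1 ?mulr0.
have -> : PXZ (x, z) = 0 by apply/eqP; rewrite eq_le P0 andbT leNgt.
by rewrite !mul0r mulr0.
Qed.

Lemma sum_neg (R : realFieldType) (X : finZmodType) (F : X -> R) (x0 : X) :
  \sum_(a : X) F (x0 - a) = \sum_(a : X) F a.
Proof.
rewrite (reindex_inj (h := fun a => x0 - a)); last exact: (can_inj (subKr x0)).
by apply: eq_bigr => a _; rewrite subKr.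
Qed.

Lemma sumB (R : realFieldType) (X : finZmodType) (Z M : finType)
  (PXZ : X * Z -> R) (PM : M -> R) (thr : R) :
  (#|X| ^ 2)%:R * \sum_(e : {ffun M -> X}) \sum_m \sum_(m' | m' != m) \sum_(y : X * Z)
      PM m * (PXZ (y.1 - e m, y.2) * (thr < score PXZ PM e m' y)%R%:R)
  = \sum_m \sum_(m' | m' != m) \sum_(y : X * Z) #|{ffun M -> X}|%:R *
      (PM m * (marg_Z PXZ y.2 * \sum_(x : X) (thr < PM m' * cond_XZ PXZ x y.2)%R%:R)).
Proof.
rewrite exchange_big mulr_sumr. apply: eq_bigr => m _.
rewrite exchange_big mulr_sumr. apply: eq_bigr => m' nm.
rewrite exchange_big mulr_sumr; apply: eq_bigr => y _.
have := @sum_indep R M X m m'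
  (fun a b => PM m * (PXZ (y.1 - a, y.2) * (thr < PM m' * cond_XZ PXZ (y.1 - b) y.2)%R%:R)).
rewrite eq_sym in nm; move/(_ nm); cbv beta; rewrite /score => ->.
congr (_ * _).
under eq_bigr => a _ do rewrite -!mulr_sumr.
rewrite -mulr_sumr -mulr_suml /marg_Z.
by rewrite (@sum_neg _ _ (fun x => PXZ (x, y.2))) (@sum_neg _ _ (fun x => (thr < PM m' * cond_XZ PXZ x y.2)%R%:R)).
Qed.

Lemma keyC (R : realFieldType) (X : finZmodType) (Z M : finType)
  (PXZ : X * Z -> R) (PM : M -> R) (thr : R) (z : Z) :
  0 < thr -> (forall t, 0 <= PXZ t) -> (forall m, 0 <= PM m) -> \sum_m PM m = 1 ->
  marg_Z PXZ z * \sum_(m' : M) \sum_(x : X) (thr < PM m' * cond_XZ PXZ x z)%R%:R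
    <= marg_Z PXZ z / thr.
Proof.
move=> thr0 P0 PM0 PM1.
have mg0 : 0 <= marg_Z PXZ z by apply: sumr_ge0 => x _.
case: (eqVneq (marg_Z PXZ z) 0) => [->|mn0]; first by rewrite !mul0r.
have mgp : 0 < marg_Z PXZ z by rewrite lt_def mn0 mg0.
rewrite ler_pdivlMr // -mulrA.
rewrite -[X in _ <= X]mulr1; apply: ler_wpM2l => //.
rewrite mulrC mulr_sumr.
apply: (le_trans (y := \sum_(m' : M) \sum_(x : X) PM m' * cond_XZ PXZ x z)).
  apply: ler_sum => m' _; rewrite mulr_sumr; apply: ler_sum => x _.
  case: (boolP (thr < _)) => H; first by rewrite mulr1 ltW.
  by rewrite mulr0 mulr_ge0 // divr_ge0.
under eq_bigr => m' _ do rewrite -mulr_sumr.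
have -> : \sum_(x : X) cond_XZ PXZ x z = 1.
  by rewrite /cond_XZ -mulr_suml divff.
by rewrite -mulr_suml mulr1 PM1.
Qed.

Lemma sum_marg (R : realFieldType) (X : finZmodType) (Z : finType) (PXZ : X * Z -> R) :
  \sum_(t : X * Z) PXZ t = 1 -> \sum_(y : X * Z) marg_Z PXZ y.2 = #|X|%:R.
Proof.
move=> P1.
rewrite -(pair_bigA _ (fun (x : X) (z : Z) => marg_Z PXZ z)) /=.
rewrite /marg_Z.
have E1 : \sum_(z : Z) \sum_(x : X) PXZ (x, z) = 1.
  rewrite exchange_big (pair_bigA _ (fun (j : X) (i : Z) => PXZ (j, i))) -P1.
  by apply: eq_bigr => -[].
transitivity (\sum_(x : X) (1 : R)); first by apply: eq_bigr => x _; exact: E1.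
by rewrite sumr_const.
Qed.

Lemma stepC (R : realFieldType) (X : finZmodType) (Z M : finType)
  (PXZ : X * Z -> R) (PM : M -> R) (thr : R) :
  0 < thr -> (forall t, 0 <= PXZ t) -> \sum_t PXZ t = 1 ->
  (forall m, 0 <= PM m) -> \sum_m PM m = 1 ->
  (#|X| ^ 2)%:R * \sum_(e : {ffun M -> X}) \sum_m \sum_(m' | m' != m) \sum_(y : X * Z)
      PM m * (PXZ (y.1 - e m, y.2) * (thr < score PXZ PM e m' y)%R%:R)
  <= #|{ffun M -> X}|%:R * (#|X|%:R / thr).
Proof.
move=> thr0 P0 P1 PM0 PM1.
rewrite sumB.
have D0 : forall m' z, 0 <= \sum_(x : X) (thr < PM m' * cond_XZ PXZ x z)%R%:R :> R.
  by move=> m' z; apply: sumr_ge0 => x _; rewrite ler0n.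
have mg0 : forall z, 0 <= marg_Z PXZ z by move=> z; apply: sumr_ge0 => x _.
apply: (le_trans (y := \sum_m #|{ffun M -> X}|%:R * (PM m * (#|X|%:R / thr)))); last first.
  by rewrite -mulr_sumr -mulr_suml PM1 mul1r.
apply: ler_sum => m _.
apply: (le_trans (y := \sum_m' \sum_(y : X * Z) #|{ffun M -> X}|%:R *
      (PM m * (marg_Z PXZ y.2 * \sum_(x : X) (thr < PM m' * cond_XZ PXZ x y.2)%R%:R)))).
  rewrite [X in _ <= X](bigID (fun m' => m' != m)) /= lerDl.
  apply: sumr_ge0 => m' _; apply: sumr_ge0 => y _.
  by rewrite mulr_ge0 ?ler0n // mulr_ge0 // mulr_ge0.
rewrite exchange_big /=.
rewrite -(@sum_marg _ _ _ _ P1) mulr_suml mulr_sumr mulr_sumr.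
apply: ler_sum => y _.
rewrite -mulr_sumr; apply: ler_wpM2l; first by rewrite ler0n.
rewrite -mulr_sumr; apply: ler_wpM2l => //.
rewrite -mulr_sumr; exact: keyC.
Qed.

Theorem mainTheorem4 (R : realFieldType) (X : finZmodType) (Z M : finType)
  (PXZ : X * Z -> R) (PM : M -> R) (c : R) :
  is_dist PXZ -> is_dist PM -> 0 < c ->
  Pjs PM (cond_add_channel PXZ) <=
    \sum_(t : M * X * Z |
            (0 < PXZ (t.1.2, t.2)) &&
            (PM t.1.1 * cond_XZ PXZ t.1.2 t.2 <= c / #|X|%:R))
       PM t.1.1 * PXZ (t.1.2, t.2)
    + c^-1.
Proof.
move=> [P0 P1] [PM0 PM1] c0.
have [m0 _] : exists m0 : M, true.
  case: (pickP (fun _ : M => true)) => [m0 _|H]; first by exists m0.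
  by move: PM1; rewrite big_pred0 // => /eqP; rewrite eq_sym oner_eq0.
have N0 : (0 < #|X|)%N by apply/card_gt0P; exists 0.
have K0 : (0 < #|{ffun M -> X}|)%N by apply/card_gt0P; exists [ffun=> 0].
set N := #|X|%:R : R.
set K := #|{ffun M -> X}|%:R : R.
have Np : 0 < N by rewrite ltr0n.
have Kp : 0 < K by rewrite ltr0n.
set thr := c / N.
have thr0 : 0 < thr by rewrite divr_gt0.
set A := \sum_(t : M * X * Z | _) _.
pose B (e : {ffun M -> X}) := \sum_m \sum_(m' | m' != m) \sum_(y : X * Z)
      PM m * (PXZ (y.1 - e m, y.2) * (thr < score PXZ PM e m' y)%R%:R).
have HB : \sum_(e : {ffun M -> X}) B e <= K / c.
  have := @stepC R X Z M PXZ PM thr thr0 P0 P1 PM0 PM1.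
  rewrite -/K natrX -/N /thr.
  have -> : N / (c / N) = N ^+ 2 / c by rewrite invfM invrK; ring.
  rewrite mulrCA => H.
  by rewrite -(ler_pM2l (exprn_gt0 2 Np)).
have He : forall e : {ffun M -> X}, Pjs PM (cond_add_channel PXZ) <= A + B e.
  move=> e.
  apply: le_trans (@bigmin_le_any _ _ (Pjs_code PM (cond_add_channel PXZ)) (e, dec PXZ PM thr m0 e)) _.
  apply: le_trans (@stepA _ _ _ _ PXZ PM thr m0 e P0 PM0) _.
  rewrite lerD2r; exact: stepA2.
have : K * Pjs PM (cond_add_channel PXZ) <= K * (A + c^-1).
  apply: (le_trans (y := \sum_(e : {ffun M -> X}) (A + B e))).
    rewrite /K -sumr_const mulr_suml; apply: ler_sum => e _; rewrite mul1r; exact: He.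
  rewrite big_split /= sumr_const -/K -mulr_natl mulrDr lerD2l.
  by rewrite -/(B _); apply: le_trans HB _; rewrite mulrC.
by rewrite ler_pM2l.
Qed.
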